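(* For $\beta=(\beta_1,\beta_2)$, $\beta'=(\beta_1',\beta_2')$ with $\beta_1>\beta_2$, $\beta_1'>\beta_2'$, let $\varphi_\beta:\mathbb{R}^2\to\mathbb{R}^2$, $\varphi_\beta(S_1,S_2)=(\beta_1S_1+\beta_2S_2,\,1-S_1-S_2)$, and $g=g(\beta',\beta):=\varphi_{\beta'}^{-1}\circ\varphi_\beta$. Let $T_{ph}:=\{(S_1,S_2)\in\mathbb{R}_{\ge0}^2: S_1+S_2\le 1\}$. Then $g(T_{ph})\subset T_{ph}$ if and only if $\beta_2'\le\beta_2$ and $\beta_1\le\beta_1'$. *)

(* Defs.v *)
From Stdlib Require Import Reals Lra.
Open Scope R_scope.

Definition phi (b : R * R) (S : R * R) : R * R :=
  (fst b * fst S + snd b * snd S, 1 - fst S - snd S).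

Definition phi_inv (b : R * R) (P : R * R) : R * R :=
  ((fst P - snd b * (1 - snd P)) / (fst b - snd b),
   (fst b * (1 - snd P) - fst P) / (fst b - snd b)).

Definition g (b' b : R * R) (S : R * R) : R * R := phi_inv b' (phi b S).

Definition Tph (S : R * R) : Prop :=
  0 <= fst S /\ 0 <= snd S /\ fst S + snd S <= 1.

Lemma phi_inv_phi (b S : R * R) : fst b <> snd b -> phi_inv b (phi b S) = S.
Proof.
  destruct b as [b1 b2], S as [s1 s2]; simpl; intro H.
  assert (b1 - b2 <> 0) by lra.
  unfold phi_inv, phi; simpl; f_equal; field; auto.
Qed.

Lemma phi_phi_inv (b P : R * R) : fst b <> snd b -> phi b (phi_inv b P) = P.
Proof.
  destruct b as [b1 b2], P as [u v]; simpl; intro H.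
  assert (b1 - b2 <> 0) by lra.
  unfold phi_inv, phi; simpl; f_equal; field; auto.
Qed.

(* Main.v *)
Require Import Defs.
From Stdlib Require Import Reals Lra.
Open Scope R_scope.

Theorem lemma3p12 (b1 b2 b1' b2' : R) :
  b1 > b2 -> b1' > b2' ->
  ((forall S : R * R, Tph S -> Tph (g (b1', b2') (b1, b2) S)) <->
   (b2' <= b2 /\ b1 <= b1')).
Proof.
  intros H1 H2.
  assert (Hi : / (b1' - b2') > 0) by (apply Rinv_0_lt_compat; lra).
  assert (Hk : (b1' - b2') * / (b1' - b2') = 1) by (apply Rinv_r; lra).
  unfold g, phi, phi_inv, Tph, Rdiv; simpl.
  split.
  - intros H.
    destruct (H (0,1)) as [A _]; [simpl; lra|].
    destruct (H (1,0)) as [_ [B _]]; [simpl; lra|].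
    simpl in A, B.
    replace ((b1 * 0 + b2 * 1 - b2' * (1 - (1 - 0 - 1))) * / (b1' - b2')) with ((b2 - b2') * / (b1' - b2')) in A by ring.
    replace ((b1' * (1 - (1 - 1 - 0)) - (b1 * 1 + b2 * 0)) * / (b1' - b2')) with ((b1' - b1) * / (b1' - b2')) in B by ring.
    split.
    + destruct (Rle_or_lt b2' b2) as [?|Hc]; [auto|].
      assert ((b2 - b2') * / (b1' - b2') < 0) by (rewrite <- (Rmult_0_l (/ (b1' - b2'))); apply Rmult_lt_compat_r; lra). lra.
    + destruct (Rle_or_lt b1 b1') as [?|Hc]; [auto|].
      assert ((b1' - b1) * / (b1' - b2') < 0) by (rewrite <- (Rmult_0_l (/ (b1' - b2'))); apply Rmult_lt_compat_r; lra). lra.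
  - intros [A B] [s1 s2] [C [D E]]; simpl in *.
    split; [|split].
    + apply Rmult_le_pos; [|lra]. nra.
    + apply Rmult_le_pos; [|lra]. nra.
    + replace ((b1 * s1 + b2 * s2 - b2' * (1 - (1 - s1 - s2))) * / (b1' - b2') +
               (b1' * (1 - (1 - s1 - s2)) - (b1 * s1 + b2 * s2)) * / (b1' - b2'))
        with ((s1 + s2) * ((b1' - b2') * / (b1' - b2'))) by ring.
      rewrite Hk; lra.
Qed.
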